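(* Let $\Omega=(0,L)^2$ with periodic boundary conditions, $M$ a positive integer, $h=L/M$, $\mathbb{V}_h\cong\mathbb{R}^{M^2}$ the grid functions on the periodic grid $\{(ih,jh):1\le i,j\le M\}$ with maximum norm $\|v\|_\infty=\max|v_{i,j}|$, $\Lambda_h$ the standard five-point central-difference matrix of the Laplacian with periodic boundary conditions, and $\varepsilon>0$. Let $0=t_0<\dots<t_N=T$, $\tau_k=t_k-t_{k-1}$, $r_k=\tau_k/\tau_{k-1}$ for $2\le k\le N$, $r_1:=0$. Let $u^n\in\mathbb{V}_h$ solve $$D_2u^n=\varepsilon^2\Lambda_hu^n-f(u^n),\qquad 1\le n\le N,$$ where $f(u)=u^3-u$ componentwise, $D_2u^1=(u^1-u^0)/\tau_1$ and for $n\ge2$ $D_2u^n=\frac{1+2r_n}{\tau_n(1+r_n)}(u^n-u^{n-1})-\frac{r_n^2}{\tau_n(1+r_n)}(u^{n-1}-u^{n-2})$. Let $r_s\in[1,1+\sqrt2)$ satisfy $0<r_k\le r_s$ for all $2\le k\le N$ (in particular $0<r_k<1+\sqrt2$), set $\eta=\frac{2r_s^2}{(1+r_s)^2}$, and assume $$\tau_n\le\frac{(1+2r_n)\eta-r_n^2}{\eta^2(1+r_n)}\cdot\frac{1-\eta}{2+4\varepsilon^2h^{-2}}\quad\text{for } n\ge1.$$ If $\|u^0\|_\infty\le1$, then $\|u^k\|_\infty\le1$ for $1\le k\le N$. *)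

(* Defs.v *)
From mathcomp Require Import all_boot all_order all_algebra.
Set Implicit Arguments. Unset Strict Implicit. Unset Printing Implicit Defensive.
Import Order.TTheory GRing.Theory Num.Theory.
Local Open Scope ring_scope.

(* Grid functions on the periodic M x M grid: V_h ~ R^(M^2);
   index i : 'I_M stands for the grid point number i+1 (i.e. (i+1)h). *)
Definition grid (R : rcfType) (M : nat) := 'I_M -> 'I_M -> R.

Definition normInf (R : rcfType) (M : nat) (v : grid R M) : R :=
  \big[Num.max/0]_(i < M) \big[Num.max/0]_(j < M) `|v i j|.

Definition lap (R : rcfType) (M : nat) (h : R) (v : grid R M) : grid R M :=
  fun i j => (v (ordS i) j + v (ord_pred i) j + v i (ordS j) + v i (ord_pred j)
              - 4 * v i j) / h ^+ 2.

Definition fCH (R : rcfType) (x : R) : R := x ^+ 3 - x.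

Definition tau (R : rcfType) (t : nat -> R) (k : nat) : R := t k - t k.-1.
Definition stepratio (R : rcfType) (t : nat -> R) (k : nat) : R :=
  if (2 <= k)%N then tau t k / tau t k.-1 else 0.

Definition D2 (R : rcfType) (M : nat) (t : nat -> R) (u : nat -> grid R M)
    (n : nat) : grid R M :=
  fun i j =>
    if n == 1%N then (u 1%N i j - u 0%N i j) / tau t 1
    else let rn := stepratio t n in
         (1 + 2 * rn) / (tau t n * (1 + rn)) * (u n i j - u n.-1 i j)
         - rn ^+ 2 / (tau t n * (1 + rn)) * (u n.-1 i j - u n.-2 i j).

(* Main.v *)
Require Import Defs.
From mathcomp Require Import all_boot all_order all_algebra.
From mathcomp Require Import ring lra.
Import Order.TTheory GRing.Theory Num.Theory.
Local Open Scope ring_scope.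

Lemma normInf_le1 (R : rcfType) (M : nat) (v : grid R M) :
  normInf v <= 1 <-> (forall i j, `|v i j| <= 1).
Proof.
rewrite /normInf; split.
  move=> H i j; apply: le_trans H.
  apply: le_trans (le_bigmax _ (fun i => \big[Num.max/0]_(j < M) `|v i j|) i).
  exact: (le_bigmax _ (fun j => `|v i j|) j).
move=> H; apply: bigmax_le => // i _; apply: bigmax_le => // j _; exact: H.
Qed.

Lemma mul_nb (R : rcfType) (m n : R) : `|n| <= `|m| -> m * n <= m ^+ 2.
Proof.
move=> H; apply: le_trans (ler_norm _) _.
rewrite normrM -real_normK ?num_real //; rewrite expr2.
by apply: ler_wpM2l.
Qed.

Lemma scal_contra (R : rcfType) (A y : R) : 0 < A -> 1 < y ->
  A * (y ^+ 2 - y) + y ^+ 2 * (y ^+ 2 - 1) <= 0 -> False.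
Proof. move=> hA hy H.
have h1 : 0 < y ^+ 2 - y by nra.
have h2 : 0 < y ^+ 2 - 1 by nra.
have h3 : 0 < y ^+ 2 by nra.
have : 0 < A * (y ^+ 2 - y) + y ^+ 2 * (y ^+ 2 - 1).
  by apply: ltr_pwDl; [apply: mulr_gt0|apply: ltW; apply: mulr_gt0].
by rewrite ltNge H. Qed.

Lemma maxp (R : rcfType) (M : nat) (h e A : R) (X W : grid R M) :
  0 < h -> 0 < A -> (forall i j, `|W i j| <= A) ->
  (forall i j, A * X i j - (e ^+ 2 * lap h X i j - fCH (X i j)) = W i j) ->
  forall i j, `|X i j| <= 1.
Proof.
move=> hh hA hW hX.
case: M X W hW hX => [|M'] X W hW hX; first by case.
pose F := fun p : 'I_M'.+1 * 'I_M'.+1 => `|X p.1 p.2|.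
case: (@arg_maxP _ _ _ (ord0, ord0) predT F isT) => p _ Hp.
suff Hm : F p <= 1.
  by move=> i j; apply: le_trans Hm; exact: (Hp (i, j) isT).
case: p Hp => i0 j0 Hp; rewrite /F /=.
set m := X i0 j0.
rewrite leNgt; apply/negP => hm.
have nb : forall i j, m * X i j <= m ^+ 2.
  by move=> i j; apply: mul_nb; exact: (Hp (i, j) isT).
have hL : m * lap h X i0 j0 <= 0.
  rewrite /lap mulrA; apply: mulr_le0_ge0; last by rewrite invr_ge0 exprn_ge0 // ltW.
  have := nb (ordS i0) j0; have := nb (ord_pred i0) j0.
  have := nb i0 (ordS j0); have := nb i0 (ord_pred j0).
  rewrite /m; move=> *; nra.
have E := hX i0 j0; rewrite -/m /fCH in E.
have hw : m * W i0 j0 <= `|m| * A.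
  apply: le_trans (ler_norm _) _; rewrite normrM; apply: ler_wpM2l => //.
have hm2 : m ^+ 2 = `|m| ^+ 2 by rewrite real_normK ?num_real.
have he : 0 <= e ^+ 2 by rewrite sqr_ge0.
have hL' : e ^+ 2 * (m * lap h X i0 j0) <= 0 by apply: mulr_ge0_le0.
apply: (@scal_contra R A `|m| hA); first exact: hm.
rewrite -E in hw.
have -> : `|m| ^+ 2 * (`|m| ^+ 2 - 1) = m ^+ 2 * (m ^+ 2 - 1) by rewrite hm2.
rewrite -hm2.
nra.
Qed.

Lemma expl (R : rcfType) (x n1 n2 n3 n4 s c : R) :
  `|x| <= 1 -> `|n1| <= 1 -> `|n2| <= 1 -> `|n3| <= 1 -> `|n4| <= 1 ->
  0 <= s -> 0 <= c -> s * (2 + 4 * c) <= 1 ->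
  `|x + s * (c * (n1 + n2 + n3 + n4 - 4 * x) - (x ^+ 3 - x))| <= 1.
Proof.
rewrite !ler_norml => /andP[x1 x2] /andP[a1 a2] /andP[b1 b2] /andP[c1 c2]
  /andP[d1 d2] hs hc hsc.
have sc : 0 <= s * c by apply: mulr_ge0.
have k1 : 0 <= 2 - x - x ^+ 2 by nra.
have k1' : 0 <= 2 + x - x ^+ 2 by nra.
have k2 : 0 <= s * (2 - x - x ^+ 2) by apply: mulr_ge0.
have k2' : 0 <= s * (2 + x - x ^+ 2) by apply: mulr_ge0.
have k3 : 0 <= (1 - x) * (1 - 4 * (s * c) - s * x * (1 + x)).
  apply: mulr_ge0; lra.
have k3' : 0 <= (1 + x) * (1 - 4 * (s * c) + s * x * (1 - x)).
  apply: mulr_ge0; lra.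
have e1 : 0 <= s * c * (1 - n1) by apply: mulr_ge0 => //; lra.
have e2 : 0 <= s * c * (1 - n2) by apply: mulr_ge0 => //; lra.
have e3 : 0 <= s * c * (1 - n3) by apply: mulr_ge0 => //; lra.
have e4 : 0 <= s * c * (1 - n4) by apply: mulr_ge0 => //; lra.
have f1 : 0 <= s * c * (1 + n1) by apply: mulr_ge0 => //; lra.
have f2 : 0 <= s * c * (1 + n2) by apply: mulr_ge0 => //; lra.
have f3 : 0 <= s * c * (1 + n3) by apply: mulr_ge0 => //; lra.
have f4 : 0 <= s * c * (1 + n4) by apply: mulr_ge0 => //; lra.
apply/andP; split; nra.
Qed.

Lemma Ybound (R : rcfType) (A B eta P Q : R) : 0 < A -> 0 <= B -> 0 < eta -> eta < 1 ->
  B < A * eta -> `|P| <= 1 -> `|P - eta * Q| <= 1 - eta ->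
  `|(A + B) * P - B * Q| <= A.
Proof.
move=> hA hB he1 he2 hBA hP hPQ.
have c0 : 0 <= eta * A + eta * B - B by nra.
have E : eta * ((A + B) * P - B * Q) = (eta * A + eta * B - B) * P + B * (P - eta * Q) by ring.
have : eta * `|(A + B) * P - B * Q| <= eta * A.
  rewrite -(gtr0_norm he1) -normrM E (gtr0_norm he1).
  apply: le_trans (ler_normD _ _) _.
  rewrite !normrM (ger0_norm c0) (ger0_norm hB).
  have h1 : (eta * A + eta * B - B) * `|P| <= (eta * A + eta * B - B) by nra.
  have h2 : B * `|P - eta * Q| <= B * (1 - eta) by nra.
  nra.
by rewrite ler_pM2l.
Qed.

Lemma Zbound (R : rcfType) (A B eta s X P Q Fx : R) : 0 < A -> 0 <= B -> 0 < eta -> eta < 1 ->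
  0 <= s -> s * (1 - eta) * (A * eta - B) = eta ^+ 2 ->
  Fx = A * (X - P) - B * (P - Q) ->
  `|X + s * Fx| <= 1 -> `|P - eta * Q| <= 1 - eta -> `|X - eta * P| <= 1 - eta.
Proof.
move=> hA hB he1 he2 hs hsK hF hX hPQ.
have pos : 0 < eta * (1 + s * A) by apply: mulr_gt0 => //; nra.
have E : eta * (1 + s * A) * (X - eta * P) = eta * (X + s * Fx) + s * B * (P - eta * Q)
   + P * (s * (1 - eta) * (A * eta - B) - eta ^+ 2) by rewrite hF; ring.
rewrite hsK subrr mulr0 addr0 in E.
have sB : 0 <= s * B by apply: mulr_ge0.
have : eta * (1 + s * A) * `|X - eta * P| <= eta * (1 + s * A) * (1 - eta).
  rewrite -(gtr0_norm pos) -normrM E (gtr0_norm pos).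
  apply: le_trans (ler_normD _ _) _.
  rewrite normrM (gtr0_norm he1) [`|s * B * _|]normrM (ger0_norm sB).
  have h1 : eta * `|X + s * Fx| <= eta by nra.
  have h2 : s * B * `|P - eta * Q| <= s * B * (1 - eta) by nra.
  have h3 : eta * (1 + s * A) * (1 - eta) = eta + s * B * (1 - eta) by nra.
  lra.
by rewrite ler_pM2l.
Qed.

Lemma params (R : rcfType) (tau r eta c : R) : 0 < tau -> 0 <= r -> 0 < eta -> eta < 1 ->
  0 <= c ->
  tau <= ((1 + 2 * r) * eta - r ^+ 2) / (eta ^+ 2 * (1 + r)) * ((1 - eta) / (2 + 4 * c)) ->
  let A := (1 + 2 * r) / (tau * (1 + r)) in
  let B := r ^+ 2 / (tau * (1 + r)) in
  let s := eta ^+ 2 / ((1 - eta) * (A * eta - B)) in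
  [/\ 0 < A, 0 <= B, B < A * eta, 0 <= s & s * (1 - eta) * (A * eta - B) = eta ^+ 2
    /\ s * (2 + 4 * c) <= 1].
Proof.
move=> ht hr he1 he2 hc H A B s.
have tr : 0 < tau * (1 + r) by apply: mulr_gt0 => //; lra.
have hA : 0 < A by rewrite /A divr_gt0 //; lra.
have hB : 0 <= B by rewrite /B divr_ge0 ?sqr_ge0 // ltW.
pose K := A * eta - B. pose G := 1 - eta. pose D := eta ^+ 2 * (2 + 4 * c).
have hG : 0 < G by rewrite /G; lra.
have hD : 0 < D by rewrite /D mulr_gt0 ?exprn_gt0 //; lra.
have E : ((1 + 2 * r) * eta - r ^+ 2) / (eta ^+ 2 * (1 + r)) * ((1 - eta) / (2 + 4 * c))
   = tau * (K * G / D).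
  rewrite /K /G /D /A /B; field.
  by rewrite !gt_eqF //; lra.
rewrite E -{1}(mulr1 tau) ler_pM2l // ler_pdivlMr // mul1r in H.
have KG : 0 < K * G by apply: lt_le_trans H.
have hK : 0 < K by move: KG; rewrite pmulr_lgt0.
have hs : s * (1 - eta) * (A * eta - B) = eta ^+ 2.
  rewrite /s -/K -/G /G; field; rewrite !gt_eqF //; lra.
split => //.
- rewrite -subr_gt0 -/K; lra.
- rewrite /s divr_ge0 ?sqr_ge0 // ltW // -/K -/G mulr_gt0 //.
split => //. rewrite /s -/K -/G mulrAC ler_pdivrMr ?mulr_gt0 // mul1r mulrC [G * K]mulrC [_ * eta ^+ 2]mulrC; move: H; rewrite /D /K /G; apply.
Qed.

Theorem theorem4p1 (R : rcfType) (L : R) (M : nat) (eps T : R) (N : nat)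
    (t : nat -> R) (u : nat -> grid R M) (rs : R) :
  0 < L -> (0 < M)%N -> 0 < eps ->
  t 0%N = 0 -> (forall k, (1 <= k <= N)%N -> t k.-1 < t k) -> t N = T ->
  (forall n, (1 <= n <= N)%N -> forall i j,
      D2 t u n i j = eps ^+ 2 * lap (L / M%:R) (u n) i j - fCH (u n i j)) ->
  1 <= rs -> rs < 1 + Num.sqrt 2 ->
  (forall k, (2 <= k <= N)%N -> 0 < stepratio t k <= rs) ->
  (let eta := 2 * rs ^+ 2 / (1 + rs) ^+ 2 in
   forall n, (1 <= n <= N)%N ->
     tau t n <= ((1 + 2 * stepratio t n) * eta - stepratio t n ^+ 2)
                  / (eta ^+ 2 * (1 + stepratio t n))
                * ((1 - eta) / (2 + 4 * eps ^+ 2 / (L / M%:R) ^+ 2))) ->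
  normInf (u 0%N) <= 1 ->
  forall k, (1 <= k <= N)%N -> normInf (u k) <= 1.
Proof.
move=> hL hM heps _ ht _ hD hrs1 hrs2 hr htau hu0.
set h := L / M%:R.
have hh : 0 < h by rewrite /h divr_gt0 // ltr0n.
set c := eps ^+ 2 / h ^+ 2.
have hc : 0 <= c by rewrite /c divr_ge0 ?sqr_ge0.
cbv zeta in htau.
set eta := 2 * rs ^+ 2 / (1 + rs) ^+ 2 in htau.
have he1 : 0 < eta by rewrite /eta divr_gt0 //; nra.
have he2 : eta < 1.
  have s0 : 0 <= Num.sqrt 2 :> R by rewrite sqrtr_ge0.
  have s2 : Num.sqrt 2 ^+ 2 = 2 :> R by rewrite sqr_sqrtr.
  have q : (rs - 1) ^+ 2 < 2 by nra.
  rewrite /eta ltr_pdivrMr; last by nra.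
  nra.
have Hu0 := (@normInf_le1 R M (u 0%N)).1 hu0.
pose Inv m := (forall i j, `|u m i j| <= 1) /\
              (forall i j, `|u m i j - eta * u m.-1 i j| <= 1 - eta).
have Hinv : forall m, (m <= N)%N -> Inv m.
  elim => [_|m IH hm].
    split => // i j; rewrite /= -{1}(mul1r (u 0%N i j)) -mulrBl normrM.
    rewrite ger0_norm; last lra.
    by rewrite -{2}(mulr1 (1 - eta)) ler_wpM2l //; lra.
  have [IH1 IH2] := IH (ltnW hm).
  have hn : (1 <= m.+1 <= N)%N by rewrite hm.
  have htn : 0 < tau t m.+1 by rewrite /tau subr_gt0; exact: ht.
  set r := stepratio t m.+1.
  have hr0 : 0 <= r.
    rewrite /r; case h2: (2 <= m.+1)%N.
      have /andP[H1 _] := hr m.+1 (introT andP (conj h2 hm)); exact: ltW.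
    by rewrite /stepratio h2.
  have Htau := htau m.+1 hn; rewrite -/r in Htau.
  have e4 : 4 * eps ^+ 2 / (L / M%:R) ^+ 2 = 4 * c by rewrite /c /h mulrA.
  rewrite e4 in Htau.
  have [hA hB hBA hs0 [hsK hsc]] := @params R _ _ _ _ htn hr0 he1 he2 hc Htau.
  set A := (1 + 2 * r) / (tau t m.+1 * (1 + r)) in hA hB hBA hs0 hsK hsc.
  set B := r ^+ 2 / (tau t m.+1 * (1 + r)) in hA hB hBA hs0 hsK hsc.
  set s := eta ^+ 2 / ((1 - eta) * (A * eta - B)) in hs0 hsK hsc.
  have HD : forall i j, D2 t u m.+1 i j =
      A * (u m.+1 i j - u m i j) - B * (u m i j - u m.-1 i j).
    move=> i j; rewrite /D2 /=.
    case: eqP => [[m0]|_] //.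
    subst m; have r0 : r = 0 by rewrite /r /stepratio.
    rewrite /A /B r0 expr0n /= !mul0r mulr0 !addr0 subr0 mulr1 mul1r.
    by rewrite mulrC.
  have HX : forall i j, `|u m.+1 i j| <= 1.
    apply: (@maxp R M h eps A (u m.+1)
             (fun i j => (A + B) * u m i j - B * u m.-1 i j) hh hA).
      move=> i j; apply: Ybound; [exact: hA|exact: hB|exact: he1|exact: he2|exact: hBA|exact: IH1|exact: IH2].
    move=> i j; rewrite -hD // HD; ring.
  split => // i j.
  apply: (@Zbound R A B eta s _ _ (u m.-1 i j) (D2 t u m.+1 i j)) => //.
  rewrite hD // /lap /fCH.
  have -> : eps ^+ 2 * ((u m.+1 (ordS i) j + u m.+1 (ord_pred i) j + u m.+1 i (ordS j) +
       u m.+1 i (ord_pred j) - 4 * u m.+1 i j) / h ^+ 2) =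
     c * (u m.+1 (ordS i) j + u m.+1 (ord_pred i) j + u m.+1 i (ordS j) +
       u m.+1 i (ord_pred j) - 4 * u m.+1 i j) by rewrite /c mulrA mulrAC.
  by apply: expl.
move=> k /andP[_ hk]; apply/normInf_le1; exact: (Hinv k hk).1.
Qed.
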